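(* Let $\mathbf{X},\mathbf{Y},\mathbf{Z}$ be finite non-empty sets and let $P$ be a positive probability measure on $\mathbf{X}\times\mathbf{Y}\times\mathbf{Z}$, i.e. $P(x,y,z)>0$ for all $(x,y,z)$. Let $(X_n,Y_n,Z_n)$, $n=1,\dots,N$, be independent random elements of $\mathbf{X}\times\mathbf{Y}\times\mathbf{Z}$, each distributed according to $P$, where $N\ge1$ is fixed. Fix $\delta>0$, $\tilde x\in\mathbf{X}$ and $y\in\mathbf{Y}$, and define the parameter \[ P(y\mid\mathrm{do}(\tilde x)):=\sum_{z\in\mathbf{Z}}P(Y=y\mid X=\tilde x,Z=z)\,P(Z=z). \] Let $m:=\sum_{z\in\mathbf{Z}}\hat p(y\mid\tilde x,z)\,\hat p(z)$ and \[ h:=|\mathbf{Z}|\sqrt{\frac{\ln\frac{4|\mathbf{Z}|}{\delta}}{2N}}+\sum_{z\in\mathbf{Z}}\sqrt{\frac{\ln\frac{4|\mathbf{Z}|}{\delta}}{2\,\#\tilde x z}}, \] where $h:=\infty$ if $\#\tilde x z=0$ for some $z$. Then $[m-h,m+h]$ is a $(1-\delta)$-confidence interval for $P(y\mid\mathrm{do}(\tilde x))$, i.e. $\mathbb{P}\bigl(P(y\mid\mathrm{do}(\tilde x))\in[m-h,m+h]\bigr)\ge1-\delta$.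
   Context: Counting notation: for values $x,y,z$, $\#z:=|\{n\in[N]:Z_n=z\}|$, $\#\tilde x z:=|\{n\in[N]:(X_n,Z_n)=(\tilde x,z)\}|$, $\#\tilde x yz:=|\{n\in[N]:(X_n,Y_n,Z_n)=(\tilde x,y,z)\}|$. The estimates are $\hat p(z):=\#z/N$ and $\hat p(y\mid\tilde x,z):=\#\tilde x y z/\#\tilde x z$. Here $X$, $Y$, $Z$ may each be tuples of variables of a causal dag (e.g. $Z=(Z^1,\dots,Z^k)$ with $\mathbf{Z}=\mathbf{Z}^1\times\dots\times\mathbf{Z}^k$, so $|\mathbf{Z}|=|\mathbf{Z}^1|\cdots|\mathbf{Z}^k|$); the parameter is the causal effect of $X$ on $Y$ when $Z$ satisfies Pearl's back-door criterion relative to $(X,Y)$, but the claim concerns only the displayed quantity. *)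

(* Defs.v *)
From HB Require Import structures.
From mathcomp Require Import all_boot all_order all_algebra.
From mathcomp Require Import reals exp.
Set Implicit Arguments. Unset Strict Implicit. Unset Printing Implicit Defensive.
Import Order.TTheory GRing.Theory Num.Theory.
Local Open Scope ring_scope.

Section BackdoorCI.
Variables (R : realType) (X Y Z : finType).

Definition point := (X * Y * Z)%type.

Definition PZ (P : point -> R) (z : Z) : R := \sum_(x : X) \sum_(y : Y) P (x, y, z).
Definition PXZ (P : point -> R) (x : X) (z : Z) : R := \sum_(y : Y) P (x, y, z).
Definition cond_y_xz (P : point -> R) (y : Y) (x : X) (z : Z) : R :=
  P (x, y, z) / PXZ P x z.
Definition do_param (P : point -> R) (xt : X) (y : Y) : R :=
  \sum_(z : Z) cond_y_xz P y xt z * PZ P z.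

Definition sample N := {ffun 'I_N -> point}.

Definition sample_prob (P : point -> R) N (s : sample N) : R :=
  \prod_(n < N) P (s n).
Definition Prob (P : point -> R) N (E : pred (sample N)) : R :=
  \sum_(s : sample N | E s) sample_prob P s.

Definition cnt_z N (s : sample N) (z : Z) : nat :=
  #|[set n : 'I_N | (s n).2 == z]|.
Definition cnt_xz N (s : sample N) (x : X) (z : Z) : nat :=
  #|[set n : 'I_N | ((s n).1.1 == x) && ((s n).2 == z)]|.
Definition cnt_xyz N (s : sample N) (x : X) (y : Y) (z : Z) : nat :=
  #|[set n : 'I_N | [&& (s n).1.1 == x, (s n).1.2 == y & (s n).2 == z]]|.

Definition phat_z N (s : sample N) (z : Z) : R := (cnt_z s z)%:R / N%:R.
Definition phat_y_xz N (s : sample N) (y : Y) (x : X) (z : Z) : R :=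
  (cnt_xyz s x y z)%:R / (cnt_xz s x z)%:R.
Definition mhat N (s : sample N) (xt : X) (y : Y) : R :=
  \sum_(z : Z) phat_y_xz s y xt z * phat_z s z.

(* the half-width h (meaningful when every count #x~z is positive;
   otherwise h = +oo, handled in [in_CI]) *)
Definition hwidth N (s : sample N) (xt : X) (delta : R) : R :=
  let L := ln (4 * #|Z|%:R / delta) in
  #|Z|%:R * Num.sqrt (L / (2 * N%:R))
  + \sum_(z : Z) Num.sqrt (L / (2 * (cnt_xz s xt z)%:R)).

(* the event P(y | do(x~)) \in [m - h, m + h]; always true when h = +oo *)
Definition in_CI (P : point -> R) N (xt : X) (y : Y) (delta : R) (s : sample N) : bool :=
  [forall z : Z, (0 < cnt_xz s xt z)%N] ==>
  (mhat s xt y - hwidth s xt delta <= do_param P xt y <= mhat s xt y + hwidth s xt delta).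

End BackdoorCI.

(* Main.v *)
Require Import Defs.
From HB Require Import structures.
From mathcomp Require Import all_boot all_order all_algebra.
From mathcomp Require Import reals exp.
From mathcomp Require Import boolp classical_sets topology normedtype sequences derive realfun.
From mathcomp Require Import subspace_topology.
From mathcomp Require Import ring lra.
Import Order.TTheory GRing.Theory Num.Theory numFieldNormedType.Exports.
Local Open Scope ring_scope.
Set Implicit Arguments. Unset Strict Implicit. Unset Printing Implicit Defensive.
Section H.
Variables (R : realType) (r : R).
Hypothesis r0 : 0 <= r. Hypothesis r1 : r <= 1.
Definition D (m : R) : R := 1 - r + r * expR m.
Lemma D_gt0 m : 0 < D m.
Proof.
rewrite /D; have := expR_gt0 m => e0.
have [->|rn0] := eqVneq r 0; first by rewrite subr0 mul0r addr0.
have rp : 0 < r by rewrite lt_def rn0.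
have := mulr_gt0 rp e0. move: r1. clear. lra.
Qed.
Definition g (m : R) : R := m * m / 8 + r * m - ln (D m).
Definition g1 (m : R) : R := m / 4 + r - r * expR m / D m.
Lemma dD (m : R) : is_derive m 1 D (r * expR m).
Proof. rewrite /D; apply: is_derive_eq. by rewrite add0r mul1r. Qed.

Lemma dlnD (m : R) : is_derive m 1 ((@ln R) \o D) (r * expR m / D m).
Proof.
have h := is_derive1_ln (D_gt0 m).
have := is_derive1_comp h (dD m). by rewrite mulrC.
Qed.

Lemma dg (m : R) : is_derive m 1 g (g1 m).
Proof.
rewrite /g. 
have := dlnD m => h.
apply: is_derive_eq. rewrite /g1 !scaler0 add0r !scalerDr !(scaler1, scalerN). have sE : forall a b : R, a *: b = a * b by []. rewrite !sE. field. exact/lt0r_neq0/D_gt0. Qed.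

Definition g2 (m : R) : R := 4^-1 - r * (1 - r) * expR m / (D m) ^+ 2.
Lemma dg1 (m : R) : is_derive m 1 g1 (g2 m).
Proof.
rewrite /g1.
have hV := is_deriveV (lt0r_neq0 (D_gt0 m)) (dD m).
apply: is_derive_eq.
have sE : forall a b : R, a *: b = a * b by [].
rewrite /g2 !sE mulr1 mulr0 !add0r addr0.
have := D_gt0 m; rewrite /D => Dp.
field; exact: lt0r_neq0.
Qed.

Lemma g2_ge0 (m : R) : 0 <= g2 m.
Proof.
have Dp := D_gt0 m.
have -> : g2 m = ((1 - r) - r * expR m) ^+ 2 / (4 * D m ^+ 2).
  rewrite /g2; move: Dp; rewrite /D => Dp; field; exact: lt0r_neq0.
by apply: divr_ge0; [exact: sqr_ge0| apply: mulr_ge0 => //; exact: sqr_ge0].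
Qed.

End H.

Lemma deriv_cont (R : realType) (f df : R -> R) (A : set R) :
  (forall x : R, is_derive x 1 f (df x)) -> {within A, continuous f}%classic.
Proof.
move=> hf; apply: continuous_subspaceT => x.
apply/differentiable_continuous/derivable1_diffP. by case: (hf x).
Qed.

Lemma mvt0 (R : realType) (f df : R -> R) (m : R) :
  (forall x : R, is_derive x 1 f (df x)) ->
  exists c, 0 <= c * m /\ f m - f 0 = df c * m.
Proof.
move=> hf; have [m0|m0] := leP 0 m.
  have [c /andP[c0 cm] ->] := MVT_segment m0 (fun x _ => hf x) (@deriv_cont R f df _ hf).
  exists c; split; last by rewrite subr0.
  by apply: mulr_ge0 => //; rewrite in_itv /= in c0.
have [c /andP[c0 cm] e] := MVT_segment (ltW m0) (fun x _ => hf x) (@deriv_cont R f df _ hf).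
exists c; split.
  by apply: mulr_le0 => //; exact: ltW.
by rewrite -opprB e sub0r mulrN opprK.
Qed.


Lemma hoeff (R : realType) (r m : R) : 0 <= r -> r <= 1 ->
  r * expR (m * (1 - r)) + (1 - r) * expR (- (m * r)) <= expR (m * m / 8).
Proof.
move=> r0 r1.
have D0 : D r 0 = 1 by rewrite /D expR0 mulr1 subrK.
have g10 : g1 r 0 = 0 by rewrite /g1 D0 expR0 mul0r add0r mulr1 divr1 subrr.
have g0 : g r 0 = 0 by rewrite /g D0 ln1 !(mulr0, mul0r) !(addr0, subr0).
have g1e x : exists c, g1 r x = g2 r c * x.
  have [c [_ e]] := mvt0 x (dg1 r0 r1).
  by exists c; rewrite -e g10 subr0.
have [c [cm e]] := mvt0 m (dg r0 r1).
have [c' e'] := g1e c.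
have gm : 0 <= g r m.
  have -> : g r m = g1 r c * m by rewrite -e g0 subr0.
  rewrite e' -mulrA.
  by apply: mulr_ge0 => //; exact: g2_ge0.
have Dp := D_gt0 r0 r1 m.
have lnle : ln (D r m) <= m * m / 8 + r * m.
  by move: gm; rewrite /g subr_ge0.
have Dle : D r m <= expR (m * m / 8 + r * m).
  by rewrite -[D r m]lnK ?ler_expR // posrE.
have -> : r * expR (m * (1 - r)) + (1 - r) * expR (- (m * r)) =
          expR (- (m * r)) * D r m.
  rewrite /D mulrBr mulr1 expRD; ring.
have -> : expR (m * m / 8) = expR (- (m * r)) * expR (m * m / 8 + r * m).
  by rewrite -expRD; congr expR; ring.
by rewrite ler_pM2l ?expR_gt0.
Qed.


Section ProbLemmas.
Variables (R : realType) (X Y Z : finType) (P : X * Y * Z -> R).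
Hypothesis P0 : forall t, 0 <= P t.
Hypothesis Psum : \sum_(t : X * Y * Z) P t = 1.
Variable N : nat.

Lemma w_ge0 (s : sample X Y Z N) : 0 <= sample_prob P s.
Proof. by apply: prodr_ge0 => n _; exact: P0. Qed.

Lemma Prob_ge0 (E : pred (sample X Y Z N)) : 0 <= Prob P E.
Proof. by apply: sumr_ge0 => s _; exact: w_ge0. Qed.

Lemma Prob_mono (E F : pred (sample X Y Z N)) :
  (forall s, E s -> F s) -> Prob P E <= Prob P F.
Proof.
move=> EF; rewrite /Prob [X in _ <= X]big_mkcond [X in X <= _]big_mkcond /=.
apply: ler_sum => s _; case: ifP => Es; first by rewrite (EF _ Es).
by case: ifP => // _; exact: w_ge0.
Qed.

Lemma sum_prod (G : 'I_N -> X * Y * Z -> R) :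
  \sum_(s : sample X Y Z N) sample_prob P s * \prod_(n < N) G n (s n) =
  \prod_(n < N) \sum_(t : X * Y * Z) P t * G n t.
Proof.
rewrite bigA_distr_bigA /=; apply: eq_bigr => s _.
by rewrite /sample_prob -big_split.
Qed.

Lemma Prob_total : Prob P (fun _ : sample X Y Z N => true) = 1.
Proof.
rewrite /Prob.
have -> : \sum_(s : sample X Y Z N | true) sample_prob P s =
  \sum_(s : sample X Y Z N) sample_prob P s * \prod_(n < N) (fun _ _ => 1 : R) n (s n).
  by apply: eq_bigr => s _; rewrite big1 ?mulr1.
rewrite (sum_prod (fun _ _ => 1)); apply: big1 => n _.
by rewrite -[RHS]Psum; apply: eq_bigr => t _; rewrite mulr1.
Qed.

Lemma Prob_compl (E : pred (sample X Y Z N)) :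
  Prob P E = 1 - Prob P (predC E).
Proof.
rewrite -Prob_total /Prob [X in _ = X - _](bigID E) /= addrK.
by [].
Qed.

Lemma Prob_union (I : finType) (E : I -> pred (sample X Y Z N)) :
  Prob P (fun s => [exists i, E i s]) <= \sum_i Prob P (E i).
Proof.
rewrite /Prob (eq_bigr (fun i => \sum_s (if E i s then sample_prob P s else 0))); last first.
  by move=> i _; rewrite big_mkcond.
rewrite exchange_big /= big_mkcond /=.
apply: ler_sum => s _; case: ifP => [/existsP[i Ei]|_].
  rewrite (bigD1 i) //= Ei lerDl; apply: sumr_ge0 => j _.
  by case: ifP => // _; exact: w_ge0.
apply: sumr_ge0 => j _; case: ifP => // _; exact: w_ge0.
Qed.
End ProbLemmas.


Section Key.
Variables (R : realType) (X Y Z : finType) (P : X * Y * Z -> R).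
Hypothesis P0 : forall t, 0 <= P t.
Hypothesis Psum : \sum_(t : X * Y * Z) P t = 1.
Variable N : nat.
Variables (A B : pred (X * Y * Z)) (L sg : R).
Hypothesis L0 : 0 <= L.
Hypothesis sg2 : sg * sg = 1.
Let a := \sum_(t | A t) P t.
Let c := \sum_(t | ~~ A t) P t.
Let ab := \sum_(t | A t && B t) P t.
Hypothesis a0 : 0 < a.
Let q := ab / a.
Let kA (s : sample X Y Z N) := #|[set n | A (s n)]|.
Let kAB (s : sample X Y Z N) := #|[set n | A (s n) && B (s n)]|.
Let Ev (s : sample X Y Z N) := (0 < kA s)%N &&
  (Num.sqrt (L / (2 * (kA s)%:R)) < sg * ((kAB s)%:R / (kA s)%:R - q)).

Lemma ac1 : a + c = 1.
Proof. by rewrite -Psum (bigID A predT). Qed.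

Lemma q01 : 0 <= q <= 1.
Proof.
have ab0 : 0 <= ab by apply: sumr_ge0 => t _; exact: P0.
have aab : ab <= a.
  rewrite /a (bigID B) /= lerDl; apply: sumr_ge0 => t _; exact: P0.
apply/andP; split; first by apply: divr_ge0 => //; exact: ltW.
by rewrite ler_pdivrMr // mul1r.
Qed.

Lemma mgf (mu : R) :
  \sum_t P t * ((if A t == true then 1 else 0) * expR (mu * ((B t)%:R - q)))
  <= a * expR (mu * mu / 8).
Proof.
have -> : \sum_t P t * ((if A t == true then 1 else 0) * expR (mu * ((B t)%:R - q)))
   = \sum_(t | A t) P t * expR (mu * ((B t)%:R - q)).
  rewrite [RHS]big_mkcond /=; apply: eq_bigr => t _.
  by case: (A t); rewrite ?mul1r ?mul0r ?mulr0.
rewrite (bigID B) /=.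
have -> : \sum_(i | A i && B i) P i * expR (mu * ((B i)%:R - q)) = ab * expR (mu * (1 - q)).
  by rewrite /ab big_distrl /=; apply: eq_bigr => t /andP[_ ->].
have -> : \sum_(i | A i && ~~ B i) P i * expR (mu * ((B i)%:R - q)) = (a - ab) * expR (- (mu * q)).
  rewrite /a /ab [X in (X - _) * _ ](bigID B) /= addrAC subrr add0r big_distrl /=.
  by apply: eq_bigr => t /andP[_ /negbTE ->]; rewrite sub0r mulrN.
have abq : ab = q * a by rewrite /q divfK // lt0r_neq0.
have /andP[q0 q1] := q01.
have H := hoeff mu q0 q1.
rewrite abq.
have -> : q * a * expR (mu * (1 - q)) + (a - q * a) * expR (- (mu * q)) =
  a * (q * expR (mu * (1 - q)) + (1 - q) * expR (- (mu * q))) by ring.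
by rewrite ler_pM2l.
Qed.

Lemma sum_const_b (b : {ffun 'I_N -> bool}) (x : R) :
  \sum_(n | b n) x = x * #|[set n | b n]|%:R.
Proof.
by rewrite -sum1dep_card natr_sum mulr_sumr; apply: eq_bigr => n _; rewrite mulr1.
Qed.

Lemma key_b (b : {ffun 'I_N -> bool}) :
  \sum_(s | Ev s && ([ffun n => A (s n)] == b)) sample_prob P s
  <= expR (- L) * \prod_(n < N) (if b n then a else c).
Proof.
set k := #|[set n | b n]|.
have kAE (s : sample X Y Z N) : [ffun n => A (s n)] == b -> kA s = k.
  move=> /eqP Sb; rewrite /kA /k; apply: eq_card => n.
  by rewrite !inE -Sb ffunE.
have kABE (s : sample X Y Z N) : [ffun n => A (s n)] == b -> kAB s = #|[set n | b n && B (s n)]|.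
  move=> /eqP Sb; rewrite /kAB; apply: eq_card => n.
  by rewrite !inE -Sb ffunE.
have a_ge0 : 0 <= a by exact: ltW.
have c_ge0 : 0 <= c by apply: sumr_ge0 => t _; exact: P0.
have RHS0 : 0 <= expR (- L) * \prod_(n < N) (if b n then a else c).
  apply: mulr_ge0; first exact: expR_ge0.
  by apply: prodr_ge0 => n _; case: (b n).
have [k0|kpos] := posnP k.
  rewrite big1 // => s /andP[/andP[h _] Sb].
  by rewrite (kAE _ Sb) k0 in h.
have kR0 : (k%:R : R) != 0 by rewrite pnatr_eq0 -lt0n.
have kRp : (0 : R) < k%:R by rewrite ltr0n.
set e := Num.sqrt (L / (2 * k%:R)).
have e0 : 0 <= e by exact: sqrtr_ge0.
have ee : e * e = L / (2 * k%:R).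
  by rewrite -expr2 sqr_sqrtr // divr_ge0 // mulr_ge0 // ltW.
set lam := 4 * e.
have lam0 : 0 <= lam by rewrite mulr_ge0.
set mu := sg * lam.
set E := expR (- (lam * k%:R * e)).
pose G (n : 'I_N) (t : X * Y * Z) : R := (if A t == b n then 1 else 0) *
   (if b n then expR (mu * ((B t)%:R - q)) else 1).
have G0 n t : 0 <= G n t.
  by rewrite /G; apply: mulr_ge0; [case: ifP|case: ifP => _; [exact: expR_ge0|]].
apply: (@le_trans _ _ (\sum_(s | Ev s && ([ffun n => A (s n)] == b))
   sample_prob P s * \prod_n G n (s n) * E)).
  apply: ler_sum => s /andP[Es Sb]; rewrite -mulrA; apply: ler_peMr; first exact: w_ge0.
  have PG : \prod_n G n (s n) = expR (mu * ((kAB s)%:R - q * k%:R)).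
    transitivity (\prod_(n | b n) expR (mu * ((B (s n))%:R - q))).
      rewrite [RHS]big_mkcond; apply: eq_bigr => n _; rewrite /G.
      have -> : (A (s n) == b n) = true by rewrite -(eqP Sb) ffunE eqxx.
      by rewrite mul1r.
    rewrite -expR_sum; congr expR.
    rewrite -mulr_sumr; congr (_ * _).
    rewrite sumrB -sum_const_b; congr (_ - _).
    rewrite (kABE _ Sb) -sum1dep_card natr_sum big_mkcondr /=.
    by apply: eq_bigr => n _; case: (B (s n)).
  rewrite PG /E -expRD; apply: le_trans (expR_ge1Dx _); rewrite lerDl subr_ge0.
  move: Es; rewrite /Ev (kAE _ Sb) -/e => /andP[_ Es].
  apply: (@le_trans _ _ (lam * k%:R * (sg * ((kAB s)%:R / k%:R - q)))).
    by rewrite ler_wpM2l ?mulr_ge0 ?ler0n // ltW.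
  by rewrite /mu le_eqVlt; apply/orP; left; apply/eqP; field.
apply: (@le_trans _ _ (\sum_s sample_prob P s * \prod_n G n (s n) * E)).
  rewrite [X in _ <= X](bigID (fun s => Ev s && ([ffun n => A (s n)] == b))) /= lerDl.
  apply: sumr_ge0 => s _; apply: mulr_ge0; last exact: expR_ge0.
  by apply: mulr_ge0; [exact: w_ge0| apply: prodr_ge0 => n _; exact: G0].
rewrite -big_distrl /= sum_prod.
apply: (@le_trans _ _ ((\prod_n (if b n then a * expR (mu * mu / 8) else c)) * E)).
  rewrite ler_wpM2r ?expR_ge0 //; apply: ler_prod => n _; apply/andP; split.
    by apply: sumr_ge0 => t _; apply: mulr_ge0; [exact: P0|exact: G0].
  rewrite /G; case: (b n); first exact: mgf.
  rewrite /c [X in _ <= X]big_mkcond /= le_eqVlt; apply/orP; left; apply/eqP/eq_bigr => t _.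
  by case: (A t); rewrite /= ?mulr1 ?mulr0.
rewrite (eq_bigr (fun n => (if b n then expR (mu * mu / 8) else 1) * (if b n then a else c))); last first.
  by move=> n _; case: (b n); rewrite ?mul1r // mulrC.
rewrite big_split /= -big_mkcond /= -expR_sum sum_const_b mulrC mulrA /E -expRD.
rewrite ler_wpM2r //; first by apply: prodr_ge0 => n _; case: (b n).
rewrite ler_expR le_eqVlt; apply/orP; left; apply/eqP.
have -> : mu * mu = (sg * sg) * (16 * (e * e)) by rewrite /mu /lam; ring.
have -> : lam * k%:R * e = 4 * k%:R * (e * e) by rewrite /lam; ring.
rewrite sg2 ee; field.
exact: kR0.
Qed.

Lemma key : Prob P Ev <= expR (- L).
Proof.
rewrite /Prob (partition_big (fun s : sample X Y Z N => [ffun n => A (s n)]) predT) //=.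
apply: (@le_trans _ _ (\sum_(b : {ffun 'I_N -> bool}) expR (- L) * \prod_(n < N) (if b n then a else c))).
  by apply: ler_sum => b _; exact: key_b.
rewrite -mulr_sumr.
have -> : \sum_(b : {ffun 'I_N -> bool}) \prod_(n < N) (if b n then a else c) =
   \prod_(n < N) \sum_(j : bool) (if j then a else c).
  by rewrite bigA_distr_bigA.
rewrite (eq_bigr (fun _ => 1)); last by move=> n _; rewrite big_bool /=; exact: ac1.
by rewrite big1 // mulr1.
Qed.
End Key.


Section Sums.
Variables (R : realType) (X Y Z : finType) (P : X * Y * Z -> R).

Lemma sum3 (F : X * Y * Z -> R) :
  \sum_t F t = \sum_(x : X) \sum_(y : Y) \sum_(z : Z) F (x, y, z).
Proof.
rewrite [RHS]pair_big /= [RHS]pair_big /=.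
by apply: eq_bigr => [[[x y] z]] _.
Qed.

Lemma sumZ (z : Z) : \sum_(t | true && (t.2 == z)) P t = PZ P z.
Proof.
rewrite big_mkcond sum3 /PZ; apply: eq_bigr => x _; apply: eq_bigr => y _ /=.
by rewrite -big_mkcond big_pred1_eq.
Qed.

Lemma sumXZ (x0 : X) (z : Z) :
  \sum_(t | (t.1.1 == x0) && (t.2 == z)) P t = PXZ P x0 z.
Proof.
rewrite big_mkcond sum3 /PXZ (bigD1 x0) //= [X in _ + X]big1 ?addr0.
  apply: eq_bigr => y _; by rewrite eqxx -big_mkcond big_pred1_eq.
move=> x /negbTE xn; apply: big1 => y _; apply: big1 => z' _.
by rewrite xn.
Qed.

Lemma sumXYZ (x0 : X) (y0 : Y) (z : Z) :
  \sum_(t | ((t.1.1 == x0) && (t.2 == z)) && (t.1.2 == y0)) P t = P (x0, y0, z).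
Proof.
rewrite (eq_bigl (pred1 (x0, y0, z))) ?big_pred1_eq // => -[[x y] z'] /=.
by rewrite !xpair_eqE andbAC.
Qed.
End Sums.

Lemma det_sum (R : realType) (Z : finType) (r pi q p ez : Z -> R) (e : R) :
  (forall z, `|r z - q z| <= ez z) -> (forall z, `|pi z - p z| <= e) ->
  (forall z, 0 <= pi z <= 1) -> (forall z, 0 <= q z <= 1) ->
  `|\sum_z r z * pi z - \sum_z q z * p z| <= #|Z|%:R * e + \sum_z ez z.
Proof.
move=> hr hp hpi hq.
rewrite -sumrB mulr_natl -sumr_const -big_split /=.
apply: le_trans (ler_norm_sum _ _ _) _; apply: ler_sum => z _.
have -> : r z * pi z - q z * p z = (r z - q z) * pi z + q z * (pi z - p z) by ring.
apply: le_trans (ler_normD _ _) _; rewrite addrC !normrM.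
have /andP[pi0 pi1] := hpi z; have /andP[q0 q1] := hq z.
rewrite (ger0_norm pi0) (ger0_norm q0); apply: lerD.
  by rewrite -[ez z]mulr1; apply: ler_pM.
by rewrite -[e]mul1r; apply: ler_pM.
Qed.

Lemma Prob_or (R : realType) (X Y Z : finType) (P : X * Y * Z -> R) N
  (P0 : forall t, 0 <= P t) (E F : pred (sample X Y Z N)) :
  Prob P (fun s => E s || F s) <= Prob P E + Prob P F.
Proof.
rewrite /Prob [X in X <= _]big_mkcond [X in _ <= X + _]big_mkcond [X in _ <= _ + X]big_mkcond -big_split /=; apply: ler_sum => s _.
have w0 := w_ge0 P0 s.
by case: (E s); case: (F s); rewrite /= ?addr0 ?add0r ?lerDl ?lexx.
Qed.

Lemma Prob_or4 (R : realType) (X Y Z : finType) (P : X * Y * Z -> R) N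
  (P0 : forall t, 0 <= P t) (E1 E2 E3 E4 : pred (sample X Y Z N)) :
  Prob P (fun s => E1 s || E2 s || E3 s || E4 s) <=
  Prob P E1 + Prob P E2 + Prob P E3 + Prob P E4.
Proof.
rewrite /Prob [X in X <= _]big_mkcond.
rewrite [X in _ <= X + _ + _ + _]big_mkcond [X in _ <= _ + X + _ + _]big_mkcond.
rewrite [X in _ <= _ + _ + X + _]big_mkcond [X in _ <= _ + _ + _ + X]big_mkcond.
rewrite -!big_split /=; apply: ler_sum => s _.
have w0 := w_ge0 P0 s.
case: (E1 s); case: (E2 s); case: (E3 s); case: (E4 s);
  rewrite /= ?addr0 ?add0r; lra.
Qed.

Definition EvK (R : realType) (X Y Z : finType) (P : X * Y * Z -> R) N
  (A B : pred (X * Y * Z)) (L sg : R) (s : sample X Y Z N) : bool :=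
  (0 < #|[set n | A (s n)]|)%N &&
  (Num.sqrt (L / (2 * (#|[set n | A (s n)]|)%:R)) <
   sg * ((#|[set n | A (s n) && B (s n)]|)%:R / (#|[set n | A (s n)]|)%:R -
   (\sum_(t | A t && B t) P t) / \sum_(t | A t) P t)).

Lemma keyK (R : realType) (X Y Z : finType) (P : X * Y * Z -> R) N
  (P0 : forall t, 0 <= P t) (Psum : \sum_t P t = 1)
  (A B : pred (X * Y * Z)) (L sg : R) :
  0 <= L -> sg * sg = 1 -> 0 < \sum_(t | A t) P t ->
  Prob P (@EvK R X Y Z P N A B L sg) <= expR (- L).
Proof. move=> L0 sg2 a0; exact: (key P0 Psum N B L0 sg2 a0). Qed.

Theorem theorem1 (R : realType) (X Y Z : finType)
  (HX : (0 < #|X|)%N) (HY : (0 < #|Y|)%N) (HZ : (0 < #|Z|)%N)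
  (P : X * Y * Z -> R)
  (Ppos : forall t, 0 < P t) (Psum : \sum_(t : X * Y * Z) P t = 1)
  (N : nat) (HN : (1 <= N)%N)
  (delta : R) (Hdelta : 0 < delta) (xt : X) (y : Y) :
  Prob P (@in_CI R X Y Z P N xt y delta) >= 1 - delta.
Proof.
have P0 t : 0 <= P t := ltW (Ppos t).
have [d1|d1] := leP 1 delta.
  by apply: le_trans (Prob_ge0 P0 _); rewrite subr_le0.
set K : R := #|Z|%:R.
have K1 : 1 <= K by rewrite /K ler1n.
set L := ln (4 * K / delta).
have Kd0 : 0 < 4 * K / delta by rewrite divr_gt0 // mulr_gt0 //; lra.
have L0 : 0 < L.
  by apply: ln_gt0; rewrite ltr_pdivlMr // mul1r; lra.
have eL : expR (- L) = delta / (4 * K).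
  by rewrite expRN lnK ?posrE // invf_div.
pose A1 := fun t : X * Y * Z => true.
pose B1 (z : Z) := fun t : X * Y * Z => t.2 == z.
pose A2 (z : Z) := fun t : X * Y * Z => (t.1.1 == xt) && (t.2 == z).
pose B2 := fun t : X * Y * Z => t.1.2 == y.
pose bad (z : Z) (s : sample X Y Z N) :=
  EvK P A1 (B1 z) L 1 s || EvK P A1 (B1 z) L (-1) s ||
  EvK P (A2 z) B2 L 1 s || EvK P (A2 z) B2 L (-1) s.
have a1 : 0 < \sum_(t | A1 t) P t by rewrite /A1 Psum.
have a2 z : 0 < \sum_(t | A2 z t) P t.
  rewrite /A2 sumXZ /PXZ (bigD1 y) //=; apply: (lt_le_trans (Ppos (xt, y, z))).
  by rewrite lerDl; apply: sumr_ge0 => i _; exact: P0.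
have det : forall s, predC (@in_CI R X Y Z P N xt y delta) s -> [exists z, bad z s].
  move=> s /=; apply: contraNT; rewrite negb_exists => /forallP nb.
  rewrite /in_CI; apply/implyP => /forallP cpos.
  rewrite -ler_distlC /mhat /do_param /hwidth /= -/L.
  apply: det_sum => z.
  - have := nb z; rewrite /bad !negb_or => /andP[/andP[/andP[_ _] h3] h4].
    have e1 : #|[set n | A2 z (s n)]| = cnt_xz s xt z by [].
    have e2 : #|[set n | A2 z (s n) && B2 (s n)]| = cnt_xyz s xt y z.
      apply: eq_card => n; rewrite !inE /A2 /B2.
      by case: ((s n).1.1 == xt); case: ((s n).1.2 == y); case: ((s n).2 == z).
    have e3 : (\sum_(t | A2 z t && B2 t) P t) / (\sum_(t | A2 z t) P t) = cond_y_xz P y xt z.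
      by rewrite /A2 /B2 sumXYZ sumXZ.
    move: h3 h4; rewrite /EvK e1 e2 e3 (cpos z) /= mul1r mulN1r => h3 h4.
    by rewrite /phat_y_xz leNgt ltr_normr negb_or h3 h4.
  - have := nb z; rewrite /bad !negb_or => /andP[/andP[/andP[h1 h2] _] _].
    have e1 : #|[set n | A1 (s n)]| = N.
      by rewrite -[RHS]card_ord; apply: eq_card => n; rewrite inE.
    have e2 : #|[set n | A1 (s n) && B1 z (s n)]| = cnt_z s z.
      by apply: eq_card => n; rewrite !inE.
    have e3 : (\sum_(t | A1 t && B1 z t) P t) / (\sum_(t | A1 t) P t) = PZ P z.
      have -> : \sum_(t | A1 t) P t = 1 by rewrite -Psum.
      by rewrite divr1 -sumZ.
    move: h1 h2; rewrite /EvK e1 e2 e3 HN /= mul1r mulN1r => h1 h2.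
    by rewrite /phat_z leNgt ltr_normr negb_or h1 h2.
  - rewrite /phat_z divr_ge0 ?ler0n //= ler_pdivrMr ?ltr0n // mul1r ler_nat.
    by rewrite /cnt_z; apply: leq_trans (max_card _) _; rewrite card_ord.
  - have px : 0 < PXZ P xt z by rewrite -sumXZ; exact: a2.
    rewrite /cond_y_xz divr_ge0 ?P0 ?(ltW px) //= ler_pdivrMr // mul1r.
    by rewrite /PXZ (bigD1 y) //= lerDl; apply: sumr_ge0 => i _; exact: P0.
rewrite (Prob_compl Psum (@in_CI R X Y Z P N xt y delta)).
have h : Prob P (predC (@in_CI R X Y Z P N xt y delta)) <= delta; last by rewrite lerD2l lerN2.

apply: le_trans (Prob_mono P0 det) _.

apply: le_trans (Prob_union P0 bad) _.
have s1 : (1 : R) * 1 = 1 by rewrite mulr1.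
have s2 : (-1 : R) * -1 = 1 by rewrite mulrNN mulr1.
apply: (@le_trans _ _ (\sum_(z : Z) 4 * expR (- L))).
  apply: ler_sum => z _; rewrite /bad.
  apply: le_trans (Prob_or4 P0 (EvK P A1 (B1 z) L 1) (EvK P A1 (B1 z) L (-1))
     (EvK P (A2 z) B2 L 1) (EvK P (A2 z) B2 L (-1))) _.
  have k1 := keyK N P0 Psum (B1 z) (ltW L0) s1 a1.
  have k2 := keyK N P0 Psum (B1 z) (ltW L0) s2 a1.
  have k3 := keyK N P0 Psum B2 (ltW L0) s1 (a2 z).
  have k4 := keyK N P0 Psum B2 (ltW L0) s2 (a2 z).
  have -> : 4 * expR (- L) = expR (- L) + expR (- L) + expR (- L) + expR (- L) by ring.
  by rewrite !lerD.
rewrite sumr_const -[_ *+ #|_|]mulr_natr eL.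
have -> : (#|[pred _ : Z | true]|%:R : R) = K by [].

rewrite le_eqVlt; apply/orP; left; apply/eqP; field.
by apply/lt0r_neq0; apply: lt_le_trans K1.
Qed.
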